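(* If $\Gamma$ is a symmetric bimatrix game with $m=2$ strategies per player, then $\mathrm{conv}(\mathrm{Nash}_{\mathrm{sym}}(\Gamma))=\mathrm{XE}_{\mathrm{sym}}(\Gamma)$.
   Context: A symmetric bimatrix game: two players with the same finite strategy set $C_1$ and utilities with $u_1(s_1,s_2)=u_2(s_2,s_1)$. Distributions on $C_1\times C_1$ are identified with nonnegative matrices summing to one. A correlated equilibrium is a distribution $\pi$ with $\sum_{s_{-i}}[u_i(t_i,s_{-i})-u_i(s)]\pi(s)\le0$ for each player $i$ and all $s_i,t_i$. $\mathrm{Nash}_{\mathrm{sym}}(\Gamma)$ is the set of symmetric Nash equilibria, viewed as matrices $xx^T$ ($x$ a probability vector) that are correlated equilibria. $\mathrm{XE}_{\mathrm{sym}}(\Gamma)$ (exchangeable equilibria) is the set of correlated equilibria lying in $\mathrm{conv}\{xx^T:x\text{ a probability vector on }C_1\}$. *)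

(* Defs.v *)
From mathcomp Require Import all_boot all_order all_algebra.
Set Implicit Arguments. Unset Strict Implicit. Unset Printing Implicit Defensive.
Import Order.TTheory GRing.Theory Num.Theory.
Local Open Scope ring_scope.

(* A symmetric bimatrix game on strategy set 'I_m is given by the payoff
   u : 'I_m -> 'I_m -> R of player 1; player 2's payoff is
   u2 s1 s2 := u s2 s1 (so u1(s1,s2) = u2(s2,s1)). *)
Definition u1 (R : numDomainType) (m : nat) (u : 'I_m -> 'I_m -> R) (s1 s2 : 'I_m) : R := u s1 s2.
Definition u2 (R : numDomainType) (m : nat) (u : 'I_m -> 'I_m -> R) (s1 s2 : 'I_m) : R := u s2 s1.

Definition is_distr (R : numDomainType) (m : nat) (pi : 'M[R]_m) : Prop :=
  (forall i j, 0 <= pi i j) /\ \sum_i \sum_j pi i j = 1.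

Definition is_prob_vec (R : numDomainType) (m : nat) (x : 'cV[R]_m) : Prop :=
  (forall i, 0 <= x i 0) /\ \sum_i x i 0 = 1.

Definition correlated_eq (R : numDomainType) (m : nat) (u : 'I_m -> 'I_m -> R)
    (pi : 'M[R]_m) : Prop :=
  is_distr pi /\
  (forall s t : 'I_m, \sum_(s2 : 'I_m) (u1 u t s2 - u1 u s s2) * pi s s2 <= 0) /\
  (forall s t : 'I_m, \sum_(s1 : 'I_m) (u2 u s1 t - u2 u s1 s) * pi s1 s <= 0).

Definition outer (R : numDomainType) (m : nat) (x : 'cV[R]_m) : 'M[R]_m := x *m x^T.

Definition Nash_sym (R : numDomainType) (m : nat) (u : 'I_m -> 'I_m -> R)
    (pi : 'M[R]_m) : Prop :=
  exists x : 'cV[R]_m, is_prob_vec x /\ pi = outer x /\ correlated_eq u pi.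

Definition conv (R : numDomainType) (m : nat) (S : 'M[R]_m -> Prop) (pi : 'M[R]_m) : Prop :=
  exists (k : nat) (lam : 'I_k -> R) (P : 'I_k -> 'M[R]_m),
    (forall l, 0 <= lam l) /\ \sum_l lam l = 1 /\ (forall l, S (P l)) /\
    pi = \sum_l lam l *: P l.

Definition XE_sym (R : numDomainType) (m : nat) (u : 'I_m -> 'I_m -> R)
    (pi : 'M[R]_m) : Prop :=
  correlated_eq u pi /\
  conv (fun M => exists x : 'cV[R]_m, is_prob_vec x /\ M = outer x) pi.

(* Main.v *)
Require Import Defs.
From mathcomp Require Import all_boot all_order all_algebra.
From mathcomp Require Import reals ring lra.
Import Order.TTheory GRing.Theory Num.Theory.
Set Implicit Arguments. Unset Strict Implicit. Unset Printing Implicit Defensive.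
Local Open Scope ring_scope.

Notation i0 := (@ord0 1).
Notation i1 := (@ord_max 1).

Lemma I2P (i : 'I_2) : i = i0 \/ i = i1.
Proof. case: i => [[|[|//]] Hi]; [left|right]; exact: val_inj. Qed.

Lemma sum2 (R : nmodType) (F : 'I_2 -> R) : \sum_i F i = F i0 + F i1.
Proof. rewrite big_ord_recr big_ord1 /=. congr (F _ + F _); exact: val_inj. Qed.

Lemma outerE (R : numDomainType) (x : 'cV[R]_2) i j : outer x i j = x i 0 * x j 0.
Proof. by rewrite /outer !mxE big_ord1 mxE. Qed.

Section S.
Variable R : realFieldType.
Variable u : 'I_2 -> 'I_2 -> R.
Let d0 := u i1 i0 - u i0 i0.
Let d1 := u i1 i1 - u i0 i1.

Lemma CE_abc (P : 'M[R]_2) : (forall i j, 0 <= P i j) ->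
  P i0 i0 + P i0 i1 + P i1 i0 + P i1 i1 = 1 -> P i0 i1 = P i1 i0 ->
  d0 * P i0 i0 + d1 * P i0 i1 <= 0 -> 0 <= d0 * P i0 i1 + d1 * P i1 i1 ->
  correlated_eq u P.
Proof.
move=> P0 P1 Ps H1 H2; split; [split=> //|split].
- by rewrite !sum2 -P1 !addrA.
- move=> s t; rewrite sum2 /u1 /d0 /d1 in H1 H2 *.
  by case: (I2P s) => ->; case: (I2P t) => ->; rewrite ?subrr ?mul0r ?addr0 //; nra.
- move=> s t; rewrite sum2 /u2 /d0 /d1 in H1 H2 *.
  by case: (I2P s) => ->; case: (I2P t) => ->; rewrite ?subrr ?mul0r ?addr0 //; rewrite -?Ps; nra.
Qed.

Lemma CE_inv (P : 'M[R]_2) : correlated_eq u P ->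
  d0 * P i0 i0 + d1 * P i0 i1 <= 0 /\ 0 <= d0 * P i1 i0 + d1 * P i1 i1.
Proof.
move=> [_ [H _]]; have := H i0 i1; have := H i1 i0.
rewrite !sum2 /u1 /d0 /d1 => A B; split; [exact: B| lra].
Qed.
End S.

Definition outS (R : numDomainType) := fun M : 'M[R]_2 => exists x : 'cV[R]_2, is_prob_vec x /\ M = outer x.

Lemma XE_facts (R : realFieldType) (P : 'M[R]_2) : conv (@outS R) P ->
  P i0 i1 = P i1 i0 /\ (P i0 i0 + P i0 i1) ^+ 2 <= P i0 i0.
Proof.
move=> [k [lam [Q [Hl [Hs [HQ ->]]]]]].
have E i j : (\sum_l lam l *: Q l) i j = \sum_l lam l * Q l i j.
  by rewrite summxE; apply eq_bigr => l _; rewrite mxE.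
split.
  rewrite !E; apply eq_bigr => l _; have [x [_ ->]] := HQ l.
  by rewrite !outerE [x i0 0 * _]mulrC.
rewrite !E; set t := _ + _.
have : 0 <= \sum_l (lam l * Q l i0 i0 - (t *+ 2) * (lam l * Q l i0 i0 + lam l * Q l i0 i1) + t ^+ 2 * lam l).
  apply sumr_ge0 => l _; have [x [[x0 x1] ->]] := HQ l.
  rewrite !outerE; rewrite sum2 in x1.
  move: x1; set p := x i0 0; set q := x i1 0 => x1.
  have -> : lam l * (p * p) - t *+ 2 * (lam l * (p * p) + lam l * (p * q)) + t ^+ 2 * lam l
     = lam l * (p - t) ^+ 2 + 2 * t * lam l * p * (1 - (p + q)).
    by ring.
  rewrite x1 subrr mulr0 addr0; apply: mulr_ge0 => //; exact: sqr_ge0.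
rewrite big_split /= sumrB -!mulr_sumr big_split /= Hs mulr1.
rewrite -/t; lra.
Qed.

Definition mk (R : ringType) (p q : R) : 'cV[R]_2 := \col_i (if i == i0 then p else q).
Lemma mk0 (R : ringType) (p q : R) j : mk p q i0 j = p. Proof. by rewrite mxE. Qed.
Lemma mk1 (R : ringType) (p q : R) j : mk p q i1 j = q. Proof. by rewrite mxE. Qed.

Lemma outer_nash (R : realFieldType) (u : 'I_2 -> 'I_2 -> R) (x : 'cV[R]_2) :
  is_prob_vec x ->
  let d0 := u i1 i0 - u i0 i0 in let d1 := u i1 i1 - u i0 i1 in
  d0 * (x i0 0 * x i0 0) + d1 * (x i0 0 * x i1 0) <= 0 ->
  0 <= d0 * (x i0 0 * x i1 0) + d1 * (x i1 0 * x i1 0) ->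
  Nash_sym u (outer x).
Proof.
move=> [x0 x1] d0 d1 H1 H2; exists x; split; first by split.
split=> //; apply: CE_abc; rewrite ?outerE //.
- by move=> i j; rewrite outerE mulr_ge0.
- rewrite sum2 in x1; rewrite -[1](expr1n _ 2) -x1; ring.
- by rewrite mulrC.
Qed.

Lemma prob_mk (R : realFieldType) (p q : R) : 0 <= p -> 0 <= q -> p + q = 1 -> is_prob_vec (mk p q).
Proof.
move=> hp hq hs; split; first by move=> i; case: (I2P i) => ->; rewrite ?mk0 ?mk1.
by rewrite sum2 mk0 mk1.
Qed.

Lemma conv_mono (R : numDomainType) (S T : 'M[R]_2 -> Prop) P :
  (forall M, S M -> T M) -> conv S P -> conv T P.
Proof.
move=> ST [k [lam [Q [H1 [H2 [H3 H4]]]]]].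
by exists k, lam, Q; split=> //; split=> //; split=> // l; apply ST.
Qed.

Lemma conv3 (R : numDomainType) (T : 'M[R]_2 -> Prop) P N1 N2 N3 al be ga :
  T N1 -> T N2 -> T N3 -> 0 <= al -> 0 <= be -> 0 <= ga -> al + be + ga = 1 ->
  P = al *: N1 + be *: N2 + ga *: N3 -> conv T P.
Proof.
move=> T1 T2 T3 a0 b0 g0 s1 ->.
exists 3, (fun l : 'I_3 => if val l == 0%N then al else if val l == 1%N then be else ga),
  (fun l : 'I_3 => if val l == 0%N then N1 else if val l == 1%N then N2 else N3).
split; first by move=> l; case: ifP => _ //; case: ifP.
split; first by rewrite !big_ord_recl big_ord0 /= addr0 addrA.
split; first by move=> l; case: ifP => _ //; case: ifP.
by rewrite !big_ord_recl big_ord0 /= addr0 addrA.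
Qed.

Definition lin4 (R : ringType) (c00 c01 c10 c11 : R) (M : 'M[R]_2) :=
  c00 * M i0 i0 + c01 * M i0 i1 + c10 * M i1 i0 + c11 * M i1 i1.

Lemma lin4_sum (R : comRingType) c00 c01 c10 c11 k (lam : 'I_k -> R) (Q : 'I_k -> 'M[R]_2) :
  lin4 c00 c01 c10 c11 (\sum_l lam l *: Q l) = \sum_l lam l * lin4 c00 c01 c10 c11 (Q l).
Proof.
rewrite /lin4 !summxE !mulr_sumr -!big_split; apply eq_bigr => l _; rewrite !mxE /=; ring.
Qed.

Lemma outer_mk (R : numDomainType) (p q : R) i j : outer (mk p q) i j =
  (if i == i0 then p else q) * (if j == i0 then p else q).
Proof. by rewrite outerE !mxE. Qed.

Lemma nash_mk (R : realFieldType) (u : 'I_2 -> 'I_2 -> R) (p q : R) :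
  0 <= p -> 0 <= q -> p + q = 1 ->
  (u i1 i0 - u i0 i0) * (p * p) + (u i1 i1 - u i0 i1) * (p * q) <= 0 ->
  0 <= (u i1 i0 - u i0 i0) * (p * q) + (u i1 i1 - u i0 i1) * (q * q) ->
  Nash_sym u (outer (mk p q)).
Proof.
move=> hp hq hs H1 H2; apply: outer_nash; first exact: prob_mk.
all: by rewrite mk0 mk1.
Qed.

Lemma comb3E (R : ringType) (A B C : 'M[R]_2) al be ga i j :
  (al *: A + be *: B + ga *: C) i j = al * A i j + be * B i j + ga * C i j.
Proof. by rewrite !mxE. Qed.

Lemma conv3_mk (R : realFieldType) (T : 'M[R]_2 -> Prop) (pi : 'M[R]_2) (p1 q1 p2 q2 p3 q3 al be ga : R) :
  T (outer (mk p1 q1)) -> T (outer (mk p2 q2)) -> T (outer (mk p3 q3)) ->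
  0 <= al -> 0 <= be -> 0 <= ga -> al + be + ga = 1 ->
  pi i0 i0 = al * (p1 * p1) + be * (p2 * p2) + ga * (p3 * p3) ->
  pi i0 i1 = al * (p1 * q1) + be * (p2 * q2) + ga * (p3 * q3) ->
  pi i1 i0 = al * (p1 * q1) + be * (p2 * q2) + ga * (p3 * q3) ->
  pi i1 i1 = al * (q1 * q1) + be * (q2 * q2) + ga * (q3 * q3) ->
  conv T pi.
Proof.
move=> T1 T2 T3 a0 b0 g0 s1 e00 e01 e10 e11.
apply: (conv3 T1 T2 T3 a0 b0 g0 s1).
apply/matrixP => i j; rewrite comb3E !outer_mk.
case: (I2P i) => ->; case: (I2P j) => -> /=; rewrite ?e00 ?e01 ?e10 ?e11; ring.
Qed.

Lemma main_rf (R : realFieldType) (u : 'I_2 -> 'I_2 -> R) (pi : 'M[R]_2) :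
  conv (Nash_sym u) pi <-> XE_sym u pi.
Proof.
set d0 := u i1 i0 - u i0 i0; set d1 := u i1 i1 - u i0 i1.
split.
- move=> hc; split; last first.
    by apply: conv_mono hc => M [x [hx [-> _]]]; exists x.
  move: hc => [k [lam [Q [Hl [Hs [HQ ->]]]]]].
  have facts l : [/\ forall i j, 0 <= Q l i j, lin4 1 1 1 1 (Q l) = 1,
     lin4 0 1 (-1) 0 (Q l) = 0, lin4 d0 d1 0 0 (Q l) <= 0 & 0 <= lin4 0 d0 0 d1 (Q l)].
    have [x [[x0 x1] [eQ hce]]] := HQ l.
    have [c1 c2] := CE_inv hce.
    have sy : Q l i0 i1 = Q l i1 i0 by rewrite eQ !outerE mulrC.
    rewrite /lin4; split.
    + by move=> i j; rewrite eQ outerE mulr_ge0.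
    + rewrite eQ !outerE !mul1r; rewrite sum2 in x1; rewrite -[RHS](expr1n _ 2) -x1; ring.
    + by rewrite sy; ring.
    + by rewrite -/d0 -/d1 in c1; lra.
    + by rewrite -/d0 -/d1 sy in c2 *; lra.
  have E c00 c01 c10 c11 : (forall l, lin4 c00 c01 c10 c11 (Q l) = 1) ->
      lin4 c00 c01 c10 c11 (\sum_l lam l *: Q l) = 1.
    by move=> H; rewrite lin4_sum -Hs; apply eq_bigr => l _; rewrite H mulr1.
  set P := \sum_l lam l *: Q l.
  have nn i j : 0 <= P i j.
    rewrite summxE; apply sumr_ge0 => l _; rewrite mxE; apply mulr_ge0 => //.
    by have [] := facts l.
  have sy : P i0 i1 = P i1 i0.
    have : lin4 0 1 (-1) 0 P = 0.
      rewrite lin4_sum big1 // => l _; have [_ _ -> _ _] := facts l; by rewrite mulr0.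
    rewrite /lin4 => h; lra.
  apply: CE_abc => //.
  + have := E 1 1 1 1 (fun l => let: And5 _ h _ _ _ := facts l in h).
    rewrite /lin4 !mul1r => ->; done.
  + have : lin4 d0 d1 0 0 P <= 0.
      rewrite lin4_sum; apply sumr_le0 => l _; have [_ _ _ h _] := facts l.
      by rewrite mulr_ge0_le0.
    rewrite /lin4 -/d0 -/d1 => h; lra.
  + have : 0 <= lin4 0 d0 0 d1 P.
      rewrite lin4_sum; apply sumr_ge0 => l _; have [_ _ _ _ h] := facts l.
      by rewrite mulr_ge0.
    rewrite /lin4 -/d0 -/d1 => h; lra.
- move=> [hce hc]; have [sy jen] := XE_facts hc.
  have [c1 c2] := CE_inv hce; rewrite -/d0 -/d1 -sy in c1 c2.
  have [[nn s1] _] := hce; rewrite !sum2 in s1.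
  set a := pi i0 i0 in c1 jen s1 *; set b := pi i0 i1 in sy c1 c2 jen s1 *.
  set c := pi i1 i1 in c2 s1 *.
  have a0 : 0 <= a := nn i0 i0. have b0 : 0 <= b := nn i0 i1. have c0 : 0 <= c := nn i1 i1.
  have N0 : d0 <= 0 -> Nash_sym u (outer (mk (1:R) 0)).
    by move=> h; apply: nash_mk; rewrite -?/d0 -?/d1; nra.
  have N1 : 0 <= d1 -> Nash_sym u (outer (mk (0:R) 1)).
    by move=> h; apply: nash_mk; rewrite -?/d0 -?/d1; nra.
  case: (boolP ((d0 == 0) && (d1 == 0))) => [/andP [/eqP e0 /eqP e1]|hne].
    apply: conv_mono hc => M [x [hx ->]]; apply: outer_nash => //; rewrite -/d0 -/d1 e0 e1; lra.
  case: (boolP ((d0 <= 0) && (0 <= d1))) => [/andP [h0 h1]|hnc].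
    case: (boolP ((d0 < 0) && (0 < d1))) => [/andP [g0 g1]|hns].
      have nd0 : d0 != 0 by apply/eqP => h; lra.
      have nd1 : d1 != 0 by apply/eqP => h; lra.
      have dd : d1 - d0 != 0 by rewrite subr_eq0; apply/eqP => h; lra.
      set p := d1 / (d1 - d0); set q := - d0 / (d1 - d0).
      have pq : p + q = 1 by rewrite /p /q; field.
      have key : d0 * p + d1 * q = 0 by rewrite /p /q; field.
      have hp : 0 <= p by rewrite /p divr_ge0 //; lra.
      have hq : 0 <= q by rewrite /q divr_ge0 //; lra.
      apply: (@conv3_mk _ _ _ 1 0 0 1 p q (- (d0 * a + d1 * b) / - d0) ((d0 * b + d1 * c) / d1)
        (b * (d1 - d0) ^+ 2 / (- d0 * d1))).
      + exact: N0.
      + exact: N1.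
      + apply: nash_mk => //; rewrite -/d0 -/d1.
        * have -> : d0 * (p * p) + d1 * (p * q) = p * (d0 * p + d1 * q) by ring.
          by rewrite key mulr0.
        * have -> : d0 * (p * q) + d1 * (q * q) = q * (d0 * p + d1 * q) by ring.
          by rewrite key mulr0.
      + rewrite divr_ge0 //; lra.
      + rewrite divr_ge0 //; lra.
      + rewrite divr_ge0 //; first by rewrite mulr_ge0 // sqr_ge0.
        by rewrite mulr_ge0 //; lra.
      + rewrite -[1]s1 -sy -/b; field; by rewrite ?nd0 ?nd1 ?oppr_eq0 ?mulf_neq0.
      + rewrite -/a /p /q; field; by rewrite ?nd0 ?nd1 ?dd ?oppr_eq0 ?mulf_neq0.
      + rewrite -/b /p /q; field; by rewrite ?nd0 ?nd1 ?dd ?oppr_eq0 ?mulf_neq0.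
      + rewrite -sy -/b /p /q; field; by rewrite ?nd0 ?nd1 ?dd ?oppr_eq0 ?mulf_neq0.
      + rewrite -/c /p /q; field; by rewrite ?nd0 ?nd1 ?dd ?oppr_eq0 ?mulf_neq0.
    have bz : b = 0.
      move: hns; rewrite negb_and -!leNgt => /orP [] h; nra.
    apply: (@conv3_mk _ _ _ 1 0 0 1 1 0 a c 0) => //.
    + exact: N0.
    + exact: N1.
    + exact: N0.
    + lra.
    + rewrite -/a; ring.
    + rewrite -/b bz; ring.
    + rewrite -sy -/b bz; ring.
    + rewrite -/c; ring.
  have acb : a * c <= b ^+ 2.
    move: hnc; rewrite negb_and -ltNge -ltNge => /orP [] h.
      case: (lerP 0 d1) => h1; nra.
    case: (lerP d0 0) => h0; nra.
  have acb' : b ^+ 2 <= a * c by nra.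
  have eq : a * c = b ^+ 2 by apply/eqP; rewrite eq_le acb acb'.
  have Np : Nash_sym u pi.
    exists (mk (a + b) (b + c)); split; first by apply: prob_mk => //; lra.
    split => //; apply/matrixP => i j; rewrite outer_mk.
    case: (I2P i) => ->; case: (I2P j) => -> /=; rewrite -?sy -/a -/b -/c; nra.
  apply: (conv3 (N1 := pi) (N2 := pi) (N3 := pi) (al := 1) (be := 0) (ga := 0)) => //.
  + lra.
  + by rewrite !scale0r !addr0 scale1r.
Qed.

Theorem theorem3p6 (R : realType) (u : 'I_2 -> 'I_2 -> R) (pi : 'M[R]_2) :
  conv (Nash_sym u) pi <-> XE_sym u pi.
Proof. exact: main_rf. Qed.
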